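(* Let $f\in\mathbb{C}[h]$ and let $V$ be a simple $\mathcal{H}(f)$-module with $\dim V=n<\infty$. If $yV=V$ and $x^nV=0$, then $V\cong B'_{\mathcal{H}(f)}(\lambda,\dot z,a)$ for some $\dot z\in\mathbb{C}$, $a\in\mathbb{C}^*$ and $\lambda\in S_f$ with $|\lambda|=n$ such that $\lambda(i)+\dot z=0$ for some $i\in\mathbb{Z}$.
   Context: For $f(h)\in\mathbb{C}[h]$, $\mathcal{H}(f)$ is the unital associative $\mathbb{C}$-algebra generated by $x,y,h$ with relations $hx=xf(h)$, $yh=f(h)y$, $yx-xy=f(h)-h$. $S_f$ is the set of maps $\lambda:\mathbb{Z}\to\mathbb{C}$ with $f(\lambda(i))=\lambda(i+1)$ for all $i$; $|\lambda|$ is the nonnegative generator of the subgroup $\{m\in\mathbb{Z}\mid\lambda(i+m)=\lambda(i)\ \forall i\}$. For $\lambda\in S_f$ with $|\lambda|=m\neq0$, $\dot z\in\mathbb{C}$, $a\in\mathbb{C}^*$: $B'_{\mathcal{H}(f)}(\lambda,\dot z,a)$ is the quotient of $\mathbb{C}[t,t^{-1}]$ by $\mathbb{C}[t,t^{-1}](t^m-a)$, with $\mathcal{H}(f)$-action induced by $ht^i=\lambda(i)t^i$, $xt^i=(\lambda(i+1)+\dot z)t^{i+1}$, $yt^i=t^{i-1}$ ($i\in\mathbb{Z}$). *)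

(* Defs.v *)
From HB Require Import structures.
From mathcomp Require Import all_boot all_order all_algebra.
Set Implicit Arguments. Unset Strict Implicit. Unset Printing Implicit Defensive.
Import Order.TTheory GRing.Theory Num.Theory.
Local Open Scope ring_scope.

(* Convention: a module V of dimension n is F^n (row vectors), and an
   element g acts by v |-> v *m G.  Hence the operator composition "a b"
   (first b, then a) corresponds to the matrix product B *m A. *)

Definition poly_mx (F : fieldType) (n : nat) (f : {poly F}) (A : 'M[F]_n)
  : 'M[F]_n := \sum_(i < size f) f`_i *: A ^+ i.

(* (X, Y, H) is an H(f)-module structure on F^n:
   hx = x f(h), yh = f(h) y, yx - xy = f(h) - h. *)
Definition Hf_module (F : fieldType) (n : nat) (f : {poly F})
  (X Y H : 'M[F]_n) : Prop :=
  let fH := poly_mx f H in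
  [/\ X *m H = fH *m X, H *m Y = Y *m fH & X *m Y - Y *m X = fH - H].

Definition Hf_simple (F : fieldType) (n : nat) (X Y H : 'M[F]_n) : Prop :=
  (0 < n)%N /\
  forall U : 'M[F]_n,
    (U *m X <= U)%MS -> (U *m Y <= U)%MS -> (U *m H <= U)%MS ->
    (U == (0 : 'M[F]_n))%MS \/ row_full U.

Definition in_Sf (F : fieldType) (f : {poly F}) (lam : int -> F) : Prop :=
  forall i : int, f.[lam i] = lam (i + 1).

Definition lam_period (F : fieldType) (lam : int -> F) (m : nat) : Prop :=
  forall k : int, (forall i : int, lam (i + k) = lam i) <-> (m%:Z %| k)%Z.

(* image of t^i in C[t,t^-1]/(t^m - a), in the basis t^0,...,t^(m-1):
   t^i = a^(i div m) t^(i mod m) *)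
Definition tvec (F : fieldType) (m : nat) (a : F) (i : int) : 'rV[F]_m :=
  \row_(k < m) (if (k : nat) == absz (i %% m%:Z)%Z then a ^ (i %/ m%:Z)%Z else 0).

(* the matrices of x, y, h on B'(lam, zd, a) (row j = image of t^j) *)
Definition Bx (F : fieldType) (m : nat) (lam : int -> F) (zd a : F) : 'M[F]_m :=
  \matrix_(j < m) ((lam (j%:Z + 1) + zd) *: tvec m a (j%:Z + 1)).
Definition By (F : fieldType) (m : nat) (a : F) : 'M[F]_m :=
  \matrix_(j < m) tvec m a (j%:Z - 1).
Definition Bh (F : fieldType) (m : nat) (lam : int -> F) (a : F) : 'M[F]_m :=
  \matrix_(j < m) (lam j%:Z *: tvec m a j%:Z).

Definition iso_B (F : fieldType) (n : nat) (X Y H : 'M[F]_n)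
  (lam : int -> F) (zd a : F) : Prop :=
  exists2 P : 'M[F]_n, P \in unitmx &
    [/\ X *m P = P *m Bx n lam zd a, Y *m P = P *m By n a
      & H *m P = P *m Bh n lam a].

(* Main.v *)
Require Import Defs.
From HB Require Import structures.
From mathcomp Require Import all_boot all_order all_algebra.
From mathcomp Require Import zify.
Import Order.TTheory GRing.Theory Num.Theory.
Local Open Scope ring_scope.
Lemma eig_exists (F : closedFieldType) r (A : 'M[F]_r) : (0 < r)%N ->
  exists a, exists2 v : 'rV_r, v *m A = a *: v & v != 0.
Proof.
move=> r0; have /closed_rootP [a ra] : size (char_poly A) != 1%N.
  by rewrite size_char_poly; case: r A r0.
by exists a; apply/eigenvalueP; rewrite eigenvalue_root_char.
Qed.

Lemma poly_mx_eig (F : fieldType) m n (f : {poly F}) (A : 'M[F]_n) (W : 'M[F]_(m, n)) mu :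
  W *m A = mu *: W -> W *m poly_mx f A = f.[mu] *: W.
Proof.
move=> WA; have WAk k : W *m A ^+ k = mu ^+ k *: W.
  elim: k => [|k IH]; first by rewrite expr0 mulmx1 expr0 scale1r.
  by rewrite exprSr -mulmxE mulmxA IH -scalemxAl WA scalerA exprSr.
rewrite /poly_mx mulmx_sumr horner_coef scaler_suml; apply: eq_bigr => i _.
by rewrite -scalemxAr WAk scalerA.
Qed.

Lemma zm1 (V : zmodType) (a b c : V) : a - b - (a + (c - b) - c) = 0.
Proof. by rewrite -[a + _ - c]addrA [c - b - c]addrAC subrr add0r subrr. Qed.
Lemma zm2 (V : zmodType) (a c d : V) : (a + (c - d)) - c - (a - d) = 0.
Proof. by rewrite -[a + _ - c]addrA [c - d - c]addrAC subrr add0r subrr. Qed.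

Lemma modz_absz (i : int) (n : nat) : (0 < n)%N ->
  ((absz (i %% n%:Z)%Z)%:Z = (i %% n%:Z)%Z) /\ (absz (i %% n%:Z)%Z < n)%N.
Proof.
move=> n0.
have ge : (0 <= (i %% n%:Z)%Z) by apply: modz_ge0; rewrite eqz_nat -lt0n.
have e : (absz (i %% n%:Z)%Z)%:Z = (i %% n%:Z)%Z by rewrite abszE ger0_norm.
split=> //; rewrite -ltz_nat e; apply: ltz_pmod; by rewrite ltz_nat.
Qed.

Lemma conj_inv (F : fieldType) n (Q A B : 'M[F]_n) : Q \in unitmx ->
  B *m Q = Q *m A -> A *m invmx Q = invmx Q *m B.
Proof.
move=> Qu e; by rewrite -[B](mulmxK Qu) e !mulmxA mulVmx // mul1mx.
Qed.

Theorem lemma10 (F : closedFieldType) (hF : [pchar F] =i pred0)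
  (f : {poly F}) (n : nat) (X Y H : 'M[F]_n) :
  Hf_module f X Y H -> Hf_simple X Y H ->
  row_full Y -> X ^+ n = 0 ->
  exists (zd a : F) (lam : int -> F),
    [/\ a != 0, in_Sf f lam, lam_period lam n,
        (exists i : int, lam i + zd = 0) & iso_B X Y H lam zd a].
Proof.
move=> [HXH HHY HXY] [n0 simple] fullY Xn.
set fH := poly_mx f H in HXH HHY HXY.
have Yu : Y \in unitmx by rewrite -row_full_unit.
set Yi := invmx Y.
(* Schur *)
pose Z := Y *m X - H.
have XY' : X *m Y = Y *m X + (fH - H) by rewrite -HXY addrC subrK.
have ZX : Z *m X = X *m Z.
  rewrite /Z mulmxBl mulmxBr; apply/eqP; rewrite -subr_eq0; apply/eqP.
  by rewrite (mulmxA X Y X) XY' mulmxDl mulmxBl -HXH -!mulmxA zm1.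
have ZY : Z *m Y = Y *m Z.
  rewrite /Z mulmxBl mulmxBr; apply/eqP; rewrite -subr_eq0; apply/eqP.
  by rewrite -(mulmxA Y X Y) XY' mulmxDr mulmxBr -HHY !mulmxA zm2.
have ZH : Z *m H = H *m Z.
  by rewrite /Z mulmxBl mulmxBr -!mulmxA HXH !mulmxA HHY.
have [zd [u0 u0Z u0n]] := @eig_exists _ _ Z n0.
have Zs : Z = zd%:M.
  pose U := eigenspace Z zd.
  have UZ : U *m Z = zd *: U by apply/eigenspaceP.
  have stab (M : 'M[F]_n) : Z *m M = M *m Z -> (U *m M <= U)%MS.
    by move=> ZM; apply/eigenspaceP; rewrite -mulmxA -ZM mulmxA UZ scalemxAl.
  case: (simple U (stab _ ZX) (stab _ ZY) (stab _ ZH)).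
    case/andP; rewrite submx0 => /eqP U0 _.
    have : (u0 <= U)%MS by apply/eigenspaceP.
    by rewrite U0 submx0 (negbTE u0n).
  move=> /row_fullP [B BU].
  have := UZ; move/(congr1 (mulmx B)); rewrite mulmxA BU mul1mx -scalemxAr BU.
  by move=> ->; rewrite scalemx1.
have Xe : X = Yi *m (H + zd%:M).
  have : Y *m X = H + zd%:M by rewrite -Zs /Z addrC subrK.
  by move=> <-; rewrite /Yi mulKmx.
pose g := fun x => f.[x].
have YiH : Yi *m H = fH *m Yi.
  by rewrite -[LHS](mulmxK Yu) -(mulmxA Yi H Y) HHY (mulmxA Yi Y) mulVmx // mul1mx.
have eig_step m (W : 'M_(m,n)) mu : W *m H = mu *: W ->
    W *m Yi *m H = g mu *: (W *m Yi).
  by move=> WH; rewrite -mulmxA YiH mulmxA (@poly_mx_eig _ _ _ f _ _ _ WH) -scalemxAl.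
have eig_iter m (W : 'M_(m,n)) mu k : W *m H = mu *: W ->
    W *m Yi ^+ k *m H = iter k g mu *: (W *m Yi ^+ k).
  move=> WH; elim: k => [|k IH]; first by rewrite expr0 mulmx1.
  by rewrite exprSr -mulmxE mulmxA (eig_step _ _ _ IH).
have Yifree : row_free Yi by rewrite row_free_unit unitmx_inv.
have nz m (W : 'M_(m,n)) k : W != 0 -> W *m Yi ^+ k != 0.
  move=> Wn; elim: k => [|k IH]; first by rewrite expr0 mulmx1.
  by rewrite exprSr -mulmxE mulmxA mulmx_free_eq0.
have [mu [v vH vn]] := @eig_exists _ _ H n0.
pose s := [seq iter k g mu | k <- iota 0 n.+1].
have : ~~ uniq s.
  apply/negP => us.
  suff: all (root (char_poly H)) s.
    move/(max_poly_roots (monic_neq0 (char_poly_monic H)))/(_ us).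
    by rewrite size_map size_iota size_char_poly ltnn.
  apply/allP => x /mapP [k _ ->]; rewrite -eigenvalue_root_char.
  by apply/eigenvalueP; exists (v *m Yi ^+ k); [exact: eig_iter | exact: nz].
case/(uniqPn 0) => i [j [ij]]; rewrite size_map size_iota => js.
rewrite !(nth_map 0%N) ?size_iota // ?(ltn_trans ij) // !nth_iota ?(ltn_trans ij) //.
rewrite !add0n => eqij.
pose nu := iter i g mu.
pose P q := (0 < q)%N && (iter q g nu == nu).
have Pji : P (j - i)%N.
  rewrite /P subn_gt0 ij /= /nu -iterD subnK ?eqij //.
  exact: ltnW.
have Pex : exists q, P q by exists (j - i)%N.
have [p Pp pmin] := @find_ex_minn P Pex.
have pn : (p <= n)%N.
  apply: (leq_trans (pmin _ Pji)); lia.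
have p0 : (0 < p)%N by case/andP: Pp.
have iterp : iter p g nu = nu by case/andP: Pp => _ /eqP.
pose K := eigenspace H nu.
have KH : K *m H = nu *: K by apply/eigenspaceP.
have Kn : K != 0.
  have : eigenvalue H nu.
    by apply/eigenvalueP; exists (v *m Yi ^+ i); [exact: eig_iter | exact: nz].
  by [].
pose B := row_base K.
have BK : (B :=: K)%MS := eq_row_base K.
have BYB : (B *m Yi ^+ p <= B)%MS.
  rewrite (eqmxMr _ BK) BK; apply/eigenspaceP.
  by rewrite (eig_iter _ _ _ _ KH) iterp.
pose M := B *m Yi ^+ p *m pinvmx B.
have MB : M *m B = B *m Yi ^+ p by rewrite /M mulmxKpV.
have r0 : (0 < \rank K)%N by rewrite lt0n mxrank_eq0.
have [a [u uM un]] := @eig_exists _ _ M r0.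
pose v0 := u *m B.
have v0n : v0 != 0 by rewrite /v0 mulmx_free_eq0 // row_base_free.
have v0Y : v0 *m Yi ^+ p = a *: v0.
  by rewrite /v0 -mulmxA -MB mulmxA uM scalemxAl.
have v0H : v0 *m H = nu *: v0.
  by apply/eigenspaceP; rewrite -/K -BK /v0 submxMl.
pose w k := v0 *m Yi ^+ k.
pose mk k := iter k g nu.
have wS k : w k *m Yi = w k.+1 by rewrite /w exprSr -mulmxE mulmxA.
have W1 k : w k *m H = mk k *: w k by exact: eig_iter.
have W2 k : w k *m X = (mk k.+1 + zd) *: w k.+1.
  rewrite Xe mulmxA wS mulmxDr W1 mul_mx_scalar scalerDl //.
have W3 k : w (k + p)%N = a *: w k.
  by rewrite /w addnC exprD -mulmxE mulmxA v0Y scalemxAl.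
have W4 k : w k.+1 *m Y = w k by rewrite -wS -mulmxA mulVmx // mulmx1.
have an : a != 0.
  apply: contraNneq (nz _ _ p v0n) => a0.
  by rewrite v0Y a0 scale0r.
have w0 : w 0%N = v0 by rewrite /w expr0 mulmx1.
have wW k : w k = a ^+ (k %/ p)%N *: w (k %% p)%N.
  rewrite {1}(divn_eq k p); elim: (k %/ p)%N => [|q IH].
    by rewrite mul0n add0n expr0 scale1r.
  by rewrite mulSn -addnA addnC W3 IH scalerA exprS.
pose W := \matrix_(k < p) w k.
have w_sub k : (w k <= W)%MS.
  rewrite wW scalemx_sub //.
  have := row_sub (Ordinal (ltn_pmod k p0)) W; by rewrite rowK.
have stabW (N : 'M_n) : (forall k, (w k *m N <= W)%MS) -> (W *m N <= W)%MS.
  by move=> hk; apply/row_subP => k; rewrite row_mul rowK.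
have WX : (W *m X <= W)%MS by apply: stabW => k; rewrite W2 scalemx_sub.
have WH : (W *m H <= W)%MS by apply: stabW => k; rewrite W1 scalemx_sub.
have wY0 : w 0%N *m Y = a^-1 *: w p.-1.
  have e : w p.-1.+1 = a *: w 0%N by rewrite prednK // -W3.
  by rewrite -(W4 p.-1) e -scalemxAl scalerK.
have WY : (W *m Y <= W)%MS.
  apply: stabW => -[|k]; last by rewrite W4.
  rewrite wY0.
  exact: scalemx_sub.
have rW : \rank W = n.
  have gE (N : 'M_n) : (W *m N <= W)%MS -> (<<W>> *m N <= <<W>>)%MS.
    by rewrite (eqmxMr _ (genmxE W)) genmxE.
  case: (simple _ (gE _ WX) (gE _ WY) (gE _ WH)).
    case/andP; rewrite submx0 => /eqP W0 _.
    have : (w 0%N <= <<W>>)%MS by rewrite genmxE.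
    by rewrite W0 submx0 w0 (negbTE v0n).
  by rewrite /row_full mxrank_gen => /eqP.
have pn' : p = n by apply/eqP; rewrite eqn_leq pn -{1}rW rank_leq_row.
subst p.
have iter_mul q : iter (q * n)%N g nu = nu.
  by elim: q => [|q IH] //; rewrite mulSn iterD IH iterp.
have iter_mod k : mk (k %% n)%N = mk k.
  by rewrite /mk {2}(divn_eq k n) addnC iterD iter_mul.
pose lam (i : int) := mk (absz (i %% n%:Z)%Z).
have lamE (k : nat) : lam k = mk k by rewrite /lam modz_nat absz_nat iter_mod.
have nZ : (n%:Z != 0) by rewrite eqz_nat -lt0n.
exists zd, a, lam; split => //.
- move=> t; have [ei _] := modz_absz t n n0.
  rewrite /lam -modzDml -ei -(PoszD _ 1) modz_nat absz_nat iter_mod addn1.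
  by [].
- move=> k; split.
    move/(_ 0); rewrite add0r (lamE 0%N) /lam /mk /= => e.
    have [ek lk] := modz_absz k n n0.
    apply/dvdz_mod0P; rewrite -ek; apply/eqP; rewrite eqz_nat; apply/negPn/negP.
    rewrite -lt0n => r0'.
    have : P (absz (k %% n%:Z)%Z) by rewrite /P r0' /= e.
    by move/pmin; rewrite leqNgt lk.
  move=> dk t; rewrite /lam -(divzK dk) addrC modzMDl //.
- have wX k : w 0%N *m X ^+ k = (\prod_(j < k) (mk j.+1 + zd)) *: w k.
    elim: k => [|k IH]; first by rewrite expr0 mulmx1 big_ord0 scale1r.
    by rewrite exprSr -mulmxE mulmxA IH -scalemxAl W2 scalerA big_ord_recr.
  have wn := W3 0%N; rewrite add0n in wn.
  have := wX n; rewrite Xn mulmx0 wn scalerA w0 => /esym/eqP.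
  rewrite scaler_eq0 (negbTE v0n) orbF mulf_eq0 (negbTE an) orbF.
  case/prodf_eq0 => l _ /eqP el; exists (l.+1)%:Z; by rewrite lamE.
have Wu : W \in unitmx by rewrite -row_full_unit /row_full rW.
have tvE (t : int) : tvec n a t *m W = a ^ (t %/ n%:Z)%Z *: w (absz (t %% n%:Z)%Z).
  have [_ lt] := modz_absz t n n0.
  have -> : tvec n a t = a ^ (t %/ n%:Z)%Z *: delta_mx 0 (Ordinal lt).
    apply/rowP => k; rewrite !mxE eqxx /=.
    have -> : (k == Ordinal lt) = ((k : nat) == absz (t %% n%:Z)%Z) by [].
    by case: ifP; rewrite ?mulr1 ?mulr0.
  by rewrite -scalemxAl -rowE rowK.
have tvN (k : nat) : tvec n a k *m W = w k.
  by rewrite tvE divz_nat modz_nat absz_nat /= -wW.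
exists (invmx W); first by rewrite unitmx_inv.
split; apply: conj_inv => //; apply/row_matrixP => l; rewrite !row_mul rowK.
- rewrite rowK -scalemxAl -(PoszD _ 1) addn1 tvN lamE.
  by rewrite W2.
- case: l => -[|l] ln /=.
    rewrite tvE rowK /= wY0.
    have e1 : (0%:Z - 1) = (-1) * n%:Z + (n.-1)%:Z.
      by rewrite predn_int // mulN1r addrA addNr.
    have r1 : (0 <= (n.-1)%:Z < `|n%:Z|%:Z).
      by rewrite absz_nat lez_nat ltz_nat prednK.
    rewrite e1 divzMDl // divz_small // addr0 modzMDl modz_small; last first.
      by rewrite ltz_nat prednK // ltnSn.
    by [].
  have -> : (l.+1)%:Z - 1 = l%:Z by rewrite -addn1 PoszD addrK.
  by rewrite tvN rowK W4.
- by rewrite -scalemxAl tvN lamE rowK W1.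
Qed.
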